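(* Let $C$ be a Plotkin-optimal projective linear code over $\mathbb{Z}_4$ of type $4^{k_1}2^{k_2}$, length $n$ and minimum Lee distance $n$, with exactly two nonzero Lee weights $m$ and $n$. Let $a,b$ be nonnegative integers, not both zero. Then there exists a Plotkin-optimal projective linear code $C'$ over $\mathbb{Z}_4$ of type $4^{k_1+a}2^{k_2+b}$, length $4^a2^bn$ and minimum Lee distance $4^a2^bn$, with exactly two nonzero Lee weights $w_1=4^a2^bm$ and $w_2=4^a2^bn$, such that $A_{w_1}(C')=A_m(C)$ and $A_{w_2}(C')=4^{k_1+a}2^{k_2+b}-1-A_m(C)$.
   Context: A linear code of length $n$ over $\mathbb{Z}_4$ is a $\mathbb{Z}_4$-submodule of $\mathbb{Z}_4^n$, of type $4^{k_1}2^{k_2}$ if isomorphic to $\mathbb{Z}_4^{k_1}\times\mathbb{Z}_2^{k_2}$. Lee weight: $w_L(0)=0,w_L(1)=1,w_L(2)=2,w_L(3)=1$, additive on vectors; minimum Lee distance is the minimum nonzero Lee weight. Plotkin-optimal means $d_L=\lfloor\frac{|C|}{|C|-1}\cdot\text{length}\rfloor$; projective means the dual (with respect to $\sum x_iy_i\in\mathbb{Z}_4$) has minimum Lee distance at least $3$. $A_w(D)$ is the number of codewords of $D$ of Lee weight $w$. *)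

(* Defs.v *)
From HB Require Import structures.
From mathcomp Require Import all_boot all_order all_algebra.
Set Implicit Arguments. Unset Strict Implicit. Unset Printing Implicit Defensive.
Import GRing.Theory.
Local Open Scope ring_scope.

Definition leeZ4 (x : 'Z_4) : nat :=
  match val x with 0 => 0 | 1 => 1 | 2 => 2 | _ => 1 end%N.

Definition lee_wt (n : nat) (v : 'rV['Z_4]_n) : nat := (\sum_(i < n) leeZ4 (v ord0 i))%N.

Definition Z4_linear (n : nat) (C : {set 'rV['Z_4]_n}) : Prop :=
  [/\ 0 \in C,
      (forall x y, x \in C -> y \in C -> x + y \in C) &
      (forall (c : 'Z_4) x, x \in C -> c *: x \in C)].

(* C is of type 4^k1 2^k2: C is isomorphic (as a group, equivalently as a
   Z4-module) to Z4^k1 x Z2^k2. *)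
Definition code_type (n : nat) (C : {set 'rV['Z_4]_n}) (k1 k2 : nat) : Prop :=
  exists f : 'rV['Z_4]_k1 * 'rV['Z_2]_k2 -> 'rV['Z_4]_n,
    [/\ forall x y, f (x + y) = f x + f y,
        injective f &
        forall v, v \in C <-> exists x, f x = v].

Definition min_lee_dist (n : nat) (C : {set 'rV['Z_4]_n}) (d : nat) : Prop :=
  (exists2 c, c \in C & c != 0 /\ lee_wt c = d) /\
  (forall c, c \in C -> c != 0 -> (d <= lee_wt c)%N).

Definition plotkin_optimal (n : nat) (C : {set 'rV['Z_4]_n}) : Prop :=
  exists d, min_lee_dist C d /\ d = (#|C| * n %/ (#|C| - 1))%N.

Definition dual_code (n : nat) (C : {set 'rV['Z_4]_n}) : {set 'rV['Z_4]_n} :=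
  [set y : 'rV['Z_4]_n | [forall x in C, (\sum_(i < n) x ord0 i * y ord0 i) == 0]].

Definition projective (n : nat) (C : {set 'rV['Z_4]_n}) : Prop :=
  forall y, y \in dual_code C -> y != 0 -> (3 <= lee_wt y)%N.

Definition two_weights (n : nat) (C : {set 'rV['Z_4]_n}) (w1 w2 : nat) : Prop :=
  [/\ w1 <> w2,
      (forall c, c \in C -> c != 0 -> lee_wt c = w1 \/ lee_wt c = w2),
      (exists2 c, c \in C & c != 0 /\ lee_wt c = w1) &
      (exists2 c, c \in C & c != 0 /\ lee_wt c = w2)].

Definition A_w (n : nat) (D : {set 'rV['Z_4]_n}) (w : nat) : nat :=
  #|[set c in D | lee_wt c == w]|.

(* Main.v *)
Require Import Defs.
From HB Require Import structures.
From mathcomp Require Import all_boot all_order all_algebra.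
From mathcomp Require Import ring zify.
Set Implicit Arguments. Unset Strict Implicit. Unset Printing Implicit Defensive.
Import GRing.Theory.
Local Open Scope ring_scope.

Ltac z4 x := case: x => [[|[|[|[|?]]]] ?] //.

Lemma lee0 (x : 'Z_4) : leeZ4 x = 0%N -> x = 0.
Proof. by z4 x; move=> _; apply/val_inj. Qed.

Lemma leeD (x y : 'Z_4) : (leeZ4 (x + y)%R <= leeZ4 x + leeZ4 y)%N.
Proof. by z4 x; z4 y. Qed.

Lemma lee_sum (I : finType) (F : I -> 'Z_4) :
  (leeZ4 (\sum_i F i)%R <= \sum_i leeZ4 (F i))%N.
Proof.
apply: (big_ind2 (fun a b => leeZ4 a <= b)%N) => //.
move=> a b c d H1 H2; apply: leq_trans (leeD _ _) _; exact: leq_add.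
Qed.

Lemma lee_wt0 n (v : 'rV['Z_4]_n) : lee_wt v = 0%N -> v = 0.
Proof.
move/eqP; rewrite /lee_wt sum_nat_eq0 => /forallP H.
apply/rowP => i; rewrite mxE; apply: lee0; exact/eqP/(H i).
Qed.

Lemma big_mxvec (R : Type) (idx : R) (op : Monoid.com_law idx) m n
  (F : 'I_(m * n) -> R) :
  \big[op/idx]_(i < m * n) F i =
  \big[op/idx]_(j < m) \big[op/idx]_(k < n) F (mxvec_index j k).
Proof.
rewrite pair_bigA (reindex (uncurry (@mxvec_index m n))) /=.
  by apply: eq_bigr => -[].
by case: (@curry_mxvec_bij m n) => g H1 H2; exists g => x _; [apply: H1|apply: H2].
Qed.

Lemma lee_wt_mxvec m n (A : 'M['Z_4]_(m, n)) :
  lee_wt (mxvec A) = (\sum_(j < m) \sum_(k < n) leeZ4 (A j k))%N.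
Proof.
rewrite /lee_wt big_mxvec; apply: eq_bigr => j _; apply: eq_bigr => k _.
by rewrite mxvecE.
Qed.

Lemma dot_mxvec m n (A B : 'M['Z_4]_(m, n)) :
  \sum_(i < m * n) mxvec A 0 i * mxvec B 0 i =
  \sum_(j < m) \sum_(k < n) A j k * B j k.
Proof.
rewrite big_mxvec; apply: eq_bigr => j _; apply: eq_bigr => k _.
by rewrite !mxvecE.
Qed.

Lemma card_code n (C : {set 'rV['Z_4]_n}) k1 k2 :
  code_type C k1 k2 -> #|C| = (4 ^ k1 * 2 ^ k2)%N.
Proof.
case=> f [fD finj fC].
have -> : C = f @: setT.
  apply/setP => v; apply/idP/imsetP.
    by case/fC => x <-; exists x.
  by case=> x _ ->; apply/fC; exists x.
rewrite card_imset // cardsT card_prod !card_mx !card_ord !mul1n.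
done.
Qed.

Section Gen.
Variables (r : nat) (s : 'Z_4).
Hypothesis r2 : (1 < r)%N.
Hypothesis H1 : forall x u : 'Z_4, s * u != 0 ->
  (\sum_(j < r) leeZ4 (x + s * u * j%:R)%R)%N = r.
Hypothesis H2 : forall col : 'I_r -> 'Z_4, \sum_j col j = 0 -> (exists j, col j != 0) ->
  (2 <= \sum_j leeZ4 (col j))%N /\
  ((\sum_j leeZ4 (col j))%N = 2%N -> s * \sum_(j < r) (j%:R * col j) != 0).

Definition G N (c : 'rV['Z_4]_N) (u : 'Z_4) : 'rV['Z_4]_(r * N) :=
  mxvec (\matrix_(j < r, k < N) (c 0 k + s * u * j%:R)).

Definition ext N (C : {set 'rV['Z_4]_N}) : {set 'rV['Z_4]_(r * N)} :=
  [set G c u | c in C, u in [set: 'Z_4]].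

Definition o0 : 'I_r := Ordinal (ltnW r2).
Definition o1 : 'I_r := Ordinal r2.

Lemma G_D N (c c' : 'rV_N) u u' : G c u + G c' u' = G (c + c') (u + u').
Proof.
rewrite /G -linearD /=; congr mxvec; apply/matrixP => j k; rewrite !mxE; ring.
Qed.

Lemma G_Z N (c : 'rV_N) u a : a *: G c u = G (a *: c) (a * u).
Proof.
rewrite /G -linearZ /=; congr mxvec; apply/matrixP => j k; rewrite !mxE; ring.
Qed.

Lemma G_su N (c : 'rV_N) u u' : s * u = s * u' -> G c u = G c u'.
Proof. by move=> e; rewrite /G; congr mxvec; apply/matrixP => j k; rewrite !mxE e. Qed.

Lemma G_inj N (c c' : 'rV_N) u u' : (0 < N)%N -> G c u = G c' u' -> c = c' /\ s * u = s * u'.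
Proof.
move=> N0 /(can_inj mxvecK)/matrixP e; split.
  by apply/rowP => k; move: (e o0 k); rewrite !mxE /= !mulr0n !mulr0 !addr0.
move: (e o1 (Ordinal N0)); rewrite !mxE /= !mulr1n !mulr1 => e'.
suff E : c 0 (Ordinal N0) = c' 0 (Ordinal N0) by move: e'; rewrite E => /addrI.
by move: (e o0 (Ordinal N0)); rewrite !mxE /= !mulr0n !mulr0 !addr0.
Qed.

Lemma G00 N : G (0 : 'rV_N) 0 = 0.
Proof.
rewrite /G -(linear0 (@mxvec _ r N)); congr mxvec; apply/matrixP => j k.
by rewrite !mxE mulr0 mul0r addr0.
Qed.

Lemma G_wt0 N (c : 'rV_N) u : s * u = 0 -> lee_wt (G c u) = (r * lee_wt c)%N.
Proof.
move=> e; rewrite lee_wt_mxvec /lee_wt exchange_big big_distrr /=.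
apply: eq_bigr => k _.
under eq_bigr => j _ do rewrite mxE e mul0r addr0.
by rewrite sum_nat_const card_ord mulnC.
Qed.

Lemma G_wt1 N (c : 'rV_N) u : s * u != 0 -> lee_wt (G c u) = (r * N)%N.
Proof.
move=> e; rewrite lee_wt_mxvec exchange_big /=.
transitivity (\sum_(k < N) r)%N; last by rewrite sum_nat_const card_ord mulnC.
apply: eq_bigr => k _; apply: etrans (H1 (c 0 k) e); apply: eq_bigr => j _; by rewrite mxE.
Qed.


Lemma ext_proj N (C : {set 'rV['Z_4]_N}) : Z4_linear C -> projective C -> projective (ext C).
Proof.
case=> C0 _ _ PC y Hy y0.
rewrite leqNgt; apply/negP => Hlt.
set Y := vec_mx y.
have ey : y = mxvec Y by rewrite /Y vec_mxK.
have HdY : forall c u, c \in C ->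
    \sum_(j < r) \sum_(k < N) (c 0 k + s * u * j%:R) * Y j k = 0.
  move=> c u Hc.
  have HG : G c u \in ext C by apply: imset2_f; rewrite ?inE.
  move: Hy; rewrite inE => /forallP/(_ (G c u))/implyP/(_ HG)/eqP.
  rewrite {1}ey /G dot_mxvec => H; rewrite -[RHS]H.
  by apply: eq_bigr => j _; apply: eq_bigr => k _; rewrite !mxE.
set z : 'rV_N := \row_k \sum_(j < r) Y j k.
have zd : z \in dual_code C.
  rewrite inE; apply/forallP => c; apply/implyP => Hc; apply/eqP.
  rewrite -[RHS](HdY c 0 Hc) exchange_big /=; apply: eq_bigr => k _.
  by rewrite mxE mulr_sumr; apply: eq_bigr => j _; rewrite mulr0 mul0r addr0.
have wz : (lee_wt z <= lee_wt y)%N.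
  rewrite ey lee_wt_mxvec exchange_big /=; apply: leq_sum => k _; rewrite mxE.
  exact: lee_sum.
have z0 : z = 0.
  apply/eqP; apply: contraT => nz; have := PC z zd nz; move: wz Hlt; lia.
have colz : forall k, \sum_(j < r) Y j k = 0.
  by move=> k; move/rowP: z0 => /(_ k); rewrite !mxE.
have Y0 : Y != 0 by rewrite -mxvec_eq0 -ey.
case/matrix0Pn: Y0 => j0 [k0 Hjk].
move: (@H2 (fun j => Y j k0) (colz k0) (ex_intro _ j0 Hjk)) => /= [H2a H2b].
have wy : lee_wt y = (\sum_(k < N) \sum_(j < r) leeZ4 (Y j k))%N.
  by rewrite ey lee_wt_mxvec exchange_big.
rewrite wy (bigD1 k0) //= in Hlt.
have cw2 : (\sum_(j < r) leeZ4 (Y j k0))%N = 2%N.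
  by apply/eqP; rewrite eqn_leq H2a andbT -ltnS; exact: leq_ltn_trans (leq_addr _ _) Hlt.
have rest : forall k, k != k0 -> forall j, Y j k = 0.
  have : (\sum_(k < N | k != k0) \sum_(j < r) leeZ4 (Y j k) == 0)%N.
    by rewrite -leqn0; move: Hlt; rewrite cw2 ltnS -[X in (_ <= X)%N]/(2 + 0)%N leq_add2l.
  rewrite sum_nat_eq0 => /forallP R k nk j.
  move: (R k); rewrite nk /= sum_nat_eq0 => /forallP/(_ j)/eqP; exact: lee0.
have e0 : s * \sum_(j < r) j%:R * Y j k0 = 0.
  rewrite -[RHS](HdY 0 1 C0) [RHS]exchange_big [RHS](bigD1 k0) //= [X in _ = _ + X]big1 ?addr0.
    rewrite mulr_sumr; apply: eq_bigr => j _; rewrite !mxE. ring.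
  by move=> k nk; apply: big1 => j _; rewrite rest // mulr0.
by move: (H2b cw2); rewrite e0 eqxx.
Qed.


Lemma ext_lin N (C : {set 'rV['Z_4]_N}) : Z4_linear C -> Z4_linear (ext C).
Proof.
case=> C0 CD CZ; split.
- by rewrite -G00; apply: imset2_f; rewrite ?inE.
- move=> x y /imset2P[c u Hc _ ->] /imset2P[c' u' Hc' _ ->].
  by rewrite G_D; apply: imset2_f; rewrite ?inE ?CD.
- move=> a x /imset2P[c u Hc _ ->].
  by rewrite G_Z; apply: imset2_f; rewrite ?inE ?CZ.
Qed.

Lemma G_wt00 N (c : 'rV_N) : lee_wt (G c 0) = (r * lee_wt c)%N.
Proof. by apply: G_wt0; rewrite mulr0. Qed.

Lemma G_nz N (c : 'rV_N) : (0 < N)%N -> c != 0 -> G c 0 != 0.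
Proof.
move=> N0 c0; apply/eqP; rewrite -(G00 N) => /G_inj [] // e _.
by rewrite e eqxx in c0.
Qed.

Section Props.
Variables (N m : nat) (C : {set 'rV['Z_4]_N}).
Hypotheses (N0 : (0 < N)%N) (CL : Z4_linear C) (TW : two_weights C m N)
  (MD : min_lee_dist C N).

Lemma ext_wts x : x \in ext C -> x != 0 ->
  lee_wt x = (r * m)%N \/ lee_wt x = (r * N)%N.
Proof.
case/imset2P => c u Hc _ -> x0.
have [e|ne] := eqVneq (s * u) 0; last by right; apply: G_wt1.
have eG : G c u = G c 0 by apply: G_su; rewrite e mulr0.
rewrite eG G_wt00.
have c0 : c != 0.
  by apply: contraNneq x0 => c0; rewrite eG c0 G00.
by case: TW => _ /(_ c Hc c0) [] ->; [left|right].
Qed.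

Lemma ext_two : two_weights (ext C) (r * m) (r * N).
Proof.
case: TW => mN _ [c1 Hc1 [c10 w1]] [c2 Hc2 [c20 w2]]; split.
- by move/eqP; rewrite eqn_pmul2l ?(ltnW r2) // => /eqP /mN.
- exact: ext_wts.
- exists (G c1 0); first by apply: imset2_f; rewrite ?inE.
  by rewrite G_nz // G_wt00 w1.
- exists (G c2 0); first by apply: imset2_f; rewrite ?inE.
  by rewrite G_nz // G_wt00 w2.
Qed.

Lemma ext_md : min_lee_dist (ext C) (r * N).
Proof.
case: TW => mN _ [c1 Hc1 [c10 w1]] [c2 Hc2 [c20 w2]]; split.
- exists (G c2 0); first by apply: imset2_f; rewrite ?inE.
  by rewrite G_nz // G_wt00 w2.
- move=> x Hx x0; case: (ext_wts Hx x0) => -> //.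
  rewrite leq_mul2l; apply/orP; right.
  by case: MD => _ /(_ c1 Hc1 c10); rewrite w1.
Qed.

Lemma ext_Aw : A_w (ext C) (r * m) = A_w C m.
Proof.
case: TW => mN _ _ _.
rewrite /A_w.
have -> : [set x in ext C | lee_wt x == (r * m)%N] =
          (fun c => G c 0) @: [set c in C | lee_wt c == m].
  apply/setP => x; rewrite inE; apply/andP/imsetP.
    case=> /imset2P[c u Hc _ ->] /eqP w.
    have [e|ne] := eqVneq (s * u) 0; last first.
      move: w; rewrite G_wt1 // => /eqP; rewrite eqn_pmul2l ?(ltnW r2) // => /eqP e.
      by rewrite e in mN.
    have eG : G c u = G c 0 by apply: G_su; rewrite e mulr0.
    exists c; last by [].
    rewrite inE Hc /=; move: w; rewrite eG G_wt00 => /eqP.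
    by rewrite eqn_pmul2l ?(ltnW r2).
  case=> c; rewrite inE => /andP[Hc /eqP w] ->; split.
    by apply: imset2_f; rewrite ?inE.
  by rewrite G_wt00 w.
rewrite card_imset //.
by move=> c c' /G_inj [] // e _.
Qed.

End Props.

End Gen.


Lemma H1_4 (x u : 'Z_4) : 1 * u != 0 ->
  (\sum_(j < 4) leeZ4 (x + 1 * u * j%:R)%R)%N = 4%N.
Proof. rewrite !big_ord_recr big_ord0 /=. z4 x; z4 u. Qed.

Lemma H1_2 (x u : 'Z_4) : 2%:R * u != 0 ->
  (\sum_(j < 2) leeZ4 (x + 2%:R * u * j%:R)%R)%N = 2%N.
Proof. rewrite !big_ord_recr big_ord0 /=. z4 x; z4 u. Qed.


Definition q0 : 'I_4 := Ordinal (isT : 0 < 4)%N.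
Definition q1 : 'I_4 := Ordinal (isT : 1 < 4)%N.
Definition q2 : 'I_4 := Ordinal (isT : 2 < 4)%N.
Definition q3 : 'I_4 := Ordinal (isT : 3 < 4)%N.
Definition p0 : 'I_2 := Ordinal (isT : 0 < 2)%N.
Definition p1 : 'I_2 := Ordinal (isT : 1 < 2)%N.

Lemma big4 (R : Type) (idx : R) (op : Monoid.com_law idx) (F : 'I_4 -> R) :
  \big[op/idx]_(j < 4) F j = op (op (op (F q0) (F q1)) (F q2)) (F q3).
Proof.
rewrite !big_ord_recr big_ord0 /= Monoid.mul1m.
by congr (op (op (op (F _) (F _)) (F _)) (F _)); apply: val_inj.
Qed.

Lemma big2 (R : Type) (idx : R) (op : Monoid.com_law idx) (F : 'I_2 -> R) :
  \big[op/idx]_(j < 2) F j = op (F p0) (F p1).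
Proof.
rewrite !big_ord_recr big_ord0 /= Monoid.mul1m.
by congr (op (F _) (F _)); apply: val_inj.
Qed.

Lemma brute4 (a b c d : 'Z_4) : a+b+c+d = 0 -> (a,b,c,d) != (0,0,0,0) ->
  (2 <= leeZ4 a + leeZ4 b + leeZ4 c + leeZ4 d)%N /\ ((leeZ4 a + leeZ4 b + leeZ4 c + leeZ4 d)%N = 2%N ->
    1 * (0%:R * a + 1%:R * b + 2%:R * c + 3%:R * d) != 0).
Proof. z4 a; z4 b; z4 c; z4 d. Qed.

Lemma brute2 (a b : 'Z_4) : a+b = 0 -> (a,b) != (0,0) ->
  (2 <= leeZ4 a + leeZ4 b)%N /\ ((leeZ4 a + leeZ4 b)%N = 2%N -> 2%:R * (0%:R * a + 1%:R * b) != 0).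
Proof. z4 a; z4 b. Qed.

Lemma H2_4 (col : 'I_4 -> 'Z_4) : \sum_j col j = 0 -> (exists j, col j != 0) ->
  (2 <= \sum_j leeZ4 (col j))%N /\
  ((\sum_j leeZ4 (col j))%N = 2%N -> 1 * \sum_(j < 4) (j%:R * col j) != 0).
Proof.
rewrite !big4 /= => Hs [j Hj]; apply: brute4 => //.
apply/eqP => -[e0 e1 e2 e3]; move/eqP: Hj; apply.
by case: j => [[|[|[|[|?]]]] p] //;
  [rewrite -[RHS]e0|rewrite -[RHS]e1|rewrite -[RHS]e2|rewrite -[RHS]e3];
  congr col; apply: val_inj.
Qed.

Lemma H2_2 (col : 'I_2 -> 'Z_4) : \sum_j col j = 0 -> (exists j, col j != 0) ->
  (2 <= \sum_j leeZ4 (col j))%N /\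
  ((\sum_j leeZ4 (col j))%N = 2%N -> 2%:R * \sum_(j < 2) (j%:R * col j) != 0).
Proof.
rewrite !big2 /= => Hs [j Hj]; apply: brute2 => //.
apply/eqP => -[e0 e1]; move/eqP: Hj; apply.
by case: j => [[|[|?]] p] //;
  [rewrite -[RHS]e0|rewrite -[RHS]e1];
  congr col; apply: val_inj.
Qed.

Definition Inv N (C : {set 'rV['Z_4]_N}) k1 k2 m A :=
  [/\ Z4_linear C, code_type C k1 k2, projective C, min_lee_dist C N
    & two_weights C m N] /\ (A_w C m = A /\ (N.+2 <= #|C|)%N).

Lemma md_pos N (C : {set 'rV['Z_4]_N}) : min_lee_dist C N -> (0 < N)%N.
Proof.
case=> -[c _ [c0 w]] _; rewrite lt0n; apply/eqP => N0.
by move: c0; rewrite (lee_wt0 (etrans w N0)) eqxx.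
Qed.

Lemma step4 N (C : {set 'rV['Z_4]_N}) k1 k2 m A :
  Inv C k1 k2 m A -> exists C' : {set 'rV['Z_4]_(4 * N)}, Inv C' (1 + k1) k2 (4 * m) A.
Proof.
case=> -[CL CT PC MD TW] [AW Ccard].
have N0 := md_pos MD.
have r2 : (1 < 4)%N by [].
have CT' : code_type (ext 4 1 C) (1 + k1) k2.
  case: CT => f [fD finj fC].
  exists (fun p : 'rV['Z_4]_(1 + k1) * 'rV['Z_2]_k2 =>
            G 4 1 (f (rsubmx p.1, p.2)) (lsubmx p.1 0 0)); split.
  + move=> [x y] [x' y'] /=; rewrite G_D -fD linearD /= !mxE.
    by [].
  + move=> [x y] [x' y'] /= /(G_inj r2 N0) [/finj [e1 e2] e3].
    rewrite e2 -(hsubmxK x) -(hsubmxK x') e1; congr (row_mx _ _, _).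
    by apply/matrixP => i j; rewrite !ord1; move: e3; rewrite !mul1r.
  + move=> v; split.
      case/imset2P => c u Hc _ ->; case/fC: Hc => -[x y] <-.
      by exists (row_mx (const_mx u) x, y) => /=; rewrite row_mxKr row_mxKl mxE.
    case=> -[x y] <-; apply: imset2_f; rewrite ?inE //; apply/fC.
    by exists (rsubmx x, y).
exists (ext 4 1 C); split; first split => //.
- exact: ext_lin.
- exact: (ext_proj r2 H2_4 CL PC).
- exact: (ext_md r2 H1_4 N0 TW MD).
- exact: (ext_two r2 H1_4 N0 TW).
- split; first by rewrite (ext_Aw r2 H1_4 N0 TW).
  rewrite (card_code CT'); rewrite (card_code CT) in Ccard.
  rewrite add1n expnS -mulnA.
  move: Ccard; set X := (4 ^ k1 * 2 ^ k2)%N; lia.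
Qed.

Definition h2 (v : 'Z_2) : 'Z_4 := (val v)%:R.

Lemma h2D (a b : 'Z_2) : 2%:R * h2 (a + b) = 2%:R * (h2 a + h2 b).
Proof. by case: a => [[|[|?]] ?]; case: b => [[|[|?]] ?] //; apply/eqP. Qed.

Lemma h2_inj (a b : 'Z_2) : 2%:R * h2 a = 2%:R * h2 b -> a = b.
Proof.
by case: a => [[|[|?]] ?]; case: b => [[|[|?]] ?] //= _; apply: val_inj.
Qed.

Lemma h2_surj (u : 'Z_4) : exists v : 'Z_2, 2%:R * u = 2%:R * h2 v.
Proof.
case: u => [[|[|[|[|?]]]] ?] //.
- by exists 0; apply: val_inj.
- by exists 1; apply: val_inj.
- by exists 0; apply: val_inj.
- by exists 1; apply: val_inj.
Qed.

Lemma step2 N (C : {set 'rV['Z_4]_N}) k1 k2 m A :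
  Inv C k1 k2 m A -> exists C' : {set 'rV['Z_4]_(2 * N)}, Inv C' k1 (1 + k2) (2 * m) A.
Proof.
case=> -[CL CT PC MD TW] [AW Ccard].
have N0 := md_pos MD.
have r2 : (1 < 2)%N by [].
have CT' : code_type (ext 2 2%:R C) k1 (1 + k2).
  case: CT => f [fD finj fC].
  exists (fun p : 'rV['Z_4]_k1 * 'rV['Z_2]_(1 + k2) =>
            G 2 2%:R (f (p.1, rsubmx p.2)) (h2 (lsubmx p.2 0 0))); split.
  + move=> [x y] [x' y'] /=; rewrite G_D -fD linearD /= !mxE.
    by apply: G_su; rewrite h2D.
  + move=> [x y] [x' y'] /= /(G_inj r2 N0) [/finj [e1 e2] /h2_inj e3].
    rewrite e1 -(hsubmxK y) -(hsubmxK y') e2; congr (_, row_mx _ _).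
    by apply/matrixP => i j; rewrite !ord1.
  + move=> v; split.
      case/imset2P => c u Hc _ ->; case/fC: Hc => -[x y] <-.
      have [w ew] := h2_surj u.
      exists (x, row_mx (const_mx w) y) => /=; rewrite row_mxKr row_mxKl mxE.
      by apply: G_su; rewrite ew.
    case=> -[x y] <-; apply: imset2_f; rewrite ?inE //; apply/fC.
    by exists (x, rsubmx y).
exists (ext 2 2%:R C); split; first split => //.
- exact: ext_lin.
- exact: (ext_proj r2 H2_2 CL PC).
- exact: (ext_md r2 H1_2 N0 TW MD).
- exact: (ext_two r2 H1_2 N0 TW).
- split; first by rewrite (ext_Aw r2 H1_2 N0 TW).
  rewrite (card_code CT'); rewrite (card_code CT) in Ccard.
  rewrite add1n expnS mulnCA.
  move: Ccard; set X := (4 ^ k1 * 2 ^ k2)%N; lia.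
Qed.

Lemma partition_card N (C : {set 'rV['Z_4]_N}) w1 w2 :
  Z4_linear C -> two_weights C w1 w2 -> #|C| = (1 + A_w C w1 + A_w C w2)%N.
Proof.
case=> C0 _ _ [w12 Hw [c1 _ [c10 e1]] [c2 _ [c20 e2]]].
have w10 : w1 != 0%N.
  by apply/eqP => w0; move: c10; rewrite (lee_wt0 (etrans e1 w0)) eqxx.
have w20 : w2 != 0%N.
  by apply/eqP => w0; move: c20; rewrite (lee_wt0 (etrans e2 w0)) eqxx.
rewrite -(cardsID [set 0] C).
have -> : C :&: [set 0] = [set 0] by apply/setIidPr; rewrite sub1set.
rewrite cards1 -addnA; congr (_ + _)%N.
have -> : C :\: [set 0] = [set c in C | lee_wt c == w1] :|: [set c in C | lee_wt c == w2].
  apply/setP => x; rewrite !inE; apply/idP/idP.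
    case/andP => x0 Hx; rewrite Hx /=.
    by case: (Hw x Hx x0) => ->; rewrite eqxx ?orbT.
  case/orP => /andP[Hx /eqP w]; rewrite Hx andbT; apply/eqP => x0;
    move: w; rewrite x0 /lee_wt big1 => [w|i _]; rewrite ?mxE //.
    by move: w10; rewrite -w eqxx.
  by move: w20; rewrite -w eqxx.
rewrite cardsU.
have -> : [set c in C | lee_wt c == w1] :&: [set c in C | lee_wt c == w2] = set0.
  apply/setP => x; rewrite !inE; apply/negP => /and3P[/andP[_ /eqP a] _ /eqP b].
  by apply: w12; rewrite -a -b.
by rewrite cards0 subn0.
Qed.

Lemma plot_of N (C : {set 'rV['Z_4]_N}) :
  min_lee_dist C N -> (N.+2 <= #|C|)%N -> plotkin_optimal C.
Proof.
move=> MD Hc; exists N; split => //.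
have [K eK] : exists K, #|C| = K.+1 by exists #|C|.-1; lia.
rewrite eK subSS subn0 mulSn mulnC addnC divnMDl; last by lia.
by rewrite divn_small ?addn0 //; lia.
Qed.

Lemma md_uniq N (C : {set 'rV['Z_4]_N}) d d' :
  min_lee_dist C d -> min_lee_dist C d' -> d = d'.
Proof.
case=> -[c Hc [c0 ec]] H [[c' Hc' [c0' ec']] H'].
apply/eqP; rewrite eqn_leq; apply/andP; split.
  by rewrite -ec'; apply: H.
by rewrite -ec; apply: H'.
Qed.

Lemma base n (C : {set 'rV['Z_4]_n}) k1 k2 m :
  Z4_linear C -> code_type C k1 k2 -> plotkin_optimal C -> projective C ->
  min_lee_dist C n -> two_weights C m n -> Inv C k1 k2 m (A_w C m).
Proof.
move=> CL CT [d [MDd ed]] PC MD TW; split => //; split => //.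
have edn := md_uniq MDd MD; rewrite edn in ed.
have n0 := md_pos MD.
have C2 : (2 <= #|C|)%N.
  case: MD => -[c Hc [c0 _]] _.
  case: CL => C0 _ _.
  have := subset_leq_card (_ : [set 0; c] \subset C).
  rewrite cards2 eq_sym c0 => H; apply: H.
  by apply/subsetP => x; rewrite !inE => /orP[] /eqP ->.
have [K eK] : exists K, #|C| = K.+1 by exists #|C|.-1; lia.
move: ed; rewrite eK subSS subn0 mulSn mulnC addnC divnMDl; last by lia.
move=> e; have : (n %/ K = 0)%N by lia.
move/eqP; rewrite -leqn0 leqNgt divn_gt0; last by lia.
rewrite -ltnNge; lia.
Qed.

Lemma castInv N N' k1 k2 m A : N = N' ->
  (exists C : {set 'rV['Z_4]_N}, Inv C k1 k2 m A) ->
  exists C : {set 'rV['Z_4]_N'}, Inv C k1 k2 m A.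
Proof. by move=> <-. Qed.

Lemma iter_b N (C : {set 'rV['Z_4]_N}) k1 k2 m A : Inv C k1 k2 m A ->
  forall b, exists C' : {set 'rV['Z_4]_(2 ^ b * N)}, Inv C' k1 (k2 + b) (2 ^ b * m) A.
Proof.
move=> HC; elim=> [|b [C' IH]].
  apply: castInv (_ : N = 2 ^ 0 * N)%N _; first by rewrite mul1n.
  by exists C; rewrite addn0 mul1n.
apply: castInv (_ : 2 * (2 ^ b * N) = 2 ^ b.+1 * N)%N _; first by rewrite expnS mulnA.
have [C'' H''] := step2 IH.
exists C''.
have -> : (k2 + b.+1 = 1 + (k2 + b))%N by lia.
by have -> : (2 ^ b.+1 * m = 2 * (2 ^ b * m))%N by rewrite expnS mulnA.
Qed.

Lemma iter_a N (C : {set 'rV['Z_4]_N}) k1 k2 m A : Inv C k1 k2 m A ->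
  forall a, exists C' : {set 'rV['Z_4]_(4 ^ a * N)}, Inv C' (k1 + a) k2 (4 ^ a * m) A.
Proof.
move=> HC; elim=> [|a [C' IH]].
  apply: castInv (_ : N = 4 ^ 0 * N)%N _; first by rewrite mul1n.
  by exists C; rewrite addn0 mul1n.
apply: castInv (_ : 4 * (4 ^ a * N) = 4 ^ a.+1 * N)%N _; first by rewrite expnS mulnA.
have [C'' H''] := step4 IH.
exists C''.
have -> : (k1 + a.+1 = 1 + (k1 + a))%N by lia.
by have -> : (4 ^ a.+1 * m = 4 * (4 ^ a * m))%N by rewrite expnS mulnA.
Qed.

Theorem theorem5p4 (n k1 k2 m : nat) (C : {set 'rV['Z_4]_n}) (a b : nat) :
  Z4_linear C -> code_type C k1 k2 -> plotkin_optimal C -> projective C ->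
  min_lee_dist C n -> two_weights C m n ->
  (0 < a + b)%N ->
  exists C' : {set 'rV['Z_4]_(4 ^ a * 2 ^ b * n)},
    [/\ Z4_linear C', code_type C' (k1 + a) (k2 + b), plotkin_optimal C',
        projective C' & min_lee_dist C' (4 ^ a * 2 ^ b * n)] /\
    [/\ two_weights C' (4 ^ a * 2 ^ b * m) (4 ^ a * 2 ^ b * n),
        A_w C' (4 ^ a * 2 ^ b * m) = A_w C m &
        A_w C' (4 ^ a * 2 ^ b * n) = (4 ^ (k1 + a) * 2 ^ (k2 + b) - 1 - A_w C m)%N].
Proof.
move=> CL CT PO PC MD TW _.
have HB := base CL CT PO PC MD TW.
have [C1 H1] := iter_b HB b.
have [C2 H2] := iter_a H1 a.
have [C3 H3] : exists C3 : {set 'rV['Z_4]_(4 ^ a * 2 ^ b * n)},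
    Inv C3 (k1 + a) (k2 + b) (4 ^ a * (2 ^ b * m)) (A_w C m).
  by apply: castInv (_ : 4 ^ a * (2 ^ b * n) = 4 ^ a * 2 ^ b * n)%N _;
    [rewrite mulnA | exists C2].
exists C3.
case: H3 => -[CL3 CT3 PC3 MD3 TW3] [AW3 Cc3].
rewrite mulnA in AW3 TW3.
split; first split => //.
  exact: plot_of.
split => //.
have := partition_card CL3 TW3; rewrite (card_code CT3) AW3.
move=> ->; lia.
Qed.
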